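(* Let $g\ge0$, let $\mu,\nu$ be partitions of $n\ge1$ with $g-1+\ell(\mu)+\ell(\nu)>0$, and let $\Gamma$ be a twisted monodromy graph of type $(g,\mu,\nu)$. Then $\Gamma$ has at most $g+1$ $4$-valent vertices.
   Context: A twisted monodromy graph of type $(g,\mu,\nu)$ is a connected directed graph $\Gamma$ of genus (first Betti number) $g$ whose inner vertices are $3$- or $4$-valent, together with an involution $\iota$ of $\Gamma$ whose fixed points are exactly the $4$-valent vertices, such that: $\Gamma$ has $2\ell(\mu)$ inward ends with weights $\mu_i$ and $2\ell(\nu)$ outward ends with weights $\nu_j$, ends exchanged by $\iota$ having the same weight; no inner vertex is a sink or a source; every bounded edge carries a positive integer weight satisfying balancing (at each inner vertex the weights of incoming edges sum to the weights of outgoing edges); the four edges at a $4$-valent vertex have the same weight; $\iota$ preserves weights; and the $\iota$-orbits of inner vertices are totally ordered compatibly with the edge directions. *)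

(* Defs.v *)
From mathcomp Require Import all_boot.
Set Implicit Arguments. Unset Strict Implicit. Unset Printing Implicit Defensive.

(* mu is a partition of n: a finite sequence of positive integers summing to n
   (the order of the parts is irrelevant everywhere below). *)
Definition is_partition (n : nat) (mu : seq nat) : bool :=
  all (fun k => 0 < k) mu && (sumn mu == n).

(* A directed graph with ends:
   - V : inner vertices, E : bounded edges (src e -> tgt e),
   - I : inward ends (each ends at the inner vertex inEnd x),
   - O : outward ends (each starts at the inner vertex outEnd y),
   with positive-integer weights, together with an involution iota acting
   compatibly on vertices, bounded edges and ends (a directed-graph
   automorphism of order <= 2). *)
Record twisted_graph := TwistedGraph {
  V : finType; E : finType; I : finType; O : finType;
  src : E -> V; tgt : E -> V;
  inEnd : I -> V; outEnd : O -> V;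
  wE : E -> nat; wI : I -> nat; wO : O -> nat;
  iV : V -> V; iE : E -> E; iI : I -> I; iO : O -> O;
  ord : V -> nat  (* ranking of the iota-orbits of inner vertices *)
}.

Section Defs.
Variable G : twisted_graph.

Definition valency (v : V G) : nat :=
  #|[set e | src e == v]| + #|[set e | tgt e == v]|
  + #|[set x | inEnd x == v]| + #|[set y | outEnd y == v]|.

Definition adjacent : rel (V G) :=
  fun u v => [exists e, ((src e == u) && (tgt e == v)) || ((src e == v) && (tgt e == u))].

Definition connected_graph : Prop := forall u v : V G, connect adjacent u v.

(* first Betti number of a connected graph (ends are leaves and do not
   contribute): #bounded edges - #inner vertices + 1 = g *)
Definition has_genus (g : nat) : Prop := #|E G| + 1 = #|V G| + g.

Definition balanced (v : V G) : Prop :=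
  \sum_(e | tgt e == v) wE e + \sum_(x | inEnd x == v) wI x
  = \sum_(e | src e == v) wE e + \sum_(y | outEnd y == v) wO y.

Definition not_sink_source (v : V G) : Prop :=
  ([exists e, tgt e == v] || [exists x, inEnd x == v]) /\
  ([exists e, src e == v] || [exists y, outEnd y == v]).

Definition equal_weights_at (v : V G) : Prop :=
  exists c, (forall e, (src e == v) || (tgt e == v) -> wE e = c) /\
            (forall x, inEnd x == v -> wI x = c) /\
            (forall y, outEnd y == v -> wO y = c).

Definition is_twisted_monodromy_graph (g : nat) (mu nu : seq nat) : Prop :=
  connected_graph /\ has_genus g
  /\ (forall v : V G, valency v = 3 \/ valency v = 4)
  /\ involutive (@iV G) /\ involutive (@iE G) /\ involutive (@iI G)
  /\ involutive (@iO G)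
  /\ (forall e : E G, src (iE e) = iV (src e) /\ tgt (iE e) = iV (tgt e))
  /\ (forall x : I G, inEnd (iI x) = iV (inEnd x))
  /\ (forall y : O G, outEnd (iO y) = iV (outEnd y))
  /\ (forall v : V G, iV v = v <-> valency v = 4)
  /\ (forall e : E G, iE e <> e) /\ (forall x : I G, iI x <> x) /\ (forall y : O G, iO y <> y)
  (* ends: 2 l(mu) inward ends with weights mu_i, 2 l(nu) outward ends with
     weights nu_j (each part once per iota-pair of ends); iota preserves weights *)
  /\ perm_eq [seq wI x | x <- enum (I G)] (mu ++ mu)
  /\ perm_eq [seq wO y | y <- enum (O G)] (nu ++ nu)
  /\ (forall e : E G, wE (iE e) = wE e) /\ (forall x : I G, wI (iI x) = wI x)
  /\ (forall y : O G, wO (iO y) = wO y)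
  /\ (forall e : E G, 0 < wE e)
  /\ (forall v : V G, balanced v)
  /\ (forall v : V G, not_sink_source v)
  /\ (forall v : V G, valency v = 4 -> equal_weights_at v)
  (* ord ranks the iota-orbits injectively (i.e. a total order on the orbits)
     and strictly increases along every bounded edge *)
  /\ (forall v : V G, ord (iV v) = ord v)
  /\ (forall u v : V G, ord u = ord v -> u = v \/ u = iV v)
  /\ (forall e : E G, ord (src e) < ord (tgt e)).

Definition four_valent : {set V G} := [set v | valency v == 4].

End Defs.

(* Main.v *)
Require Import Defs.
From mathcomp Require Import all_boot zify.
Set Implicit Arguments. Unset Strict Implicit. Unset Printing Implicit Defensive.
Section Tree.
Variables (T E : finType) (F : {set E}) (a b : E -> T) (r : T).
Definition adjF : rel T := fun x y =>
  [exists e in F, ((a e == x) && (b e == y)) || ((a e == y) && (b e == x))].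
Fixpoint reach (n : nat) : {set T} :=
  if n is n'.+1 then reach n' :|: [set v | [exists u in reach n', adjF u v]]
  else [set r].

Lemma reach_path n x p : x \in reach n -> path adjF x p -> last x p \in reach (n + size p).
Proof.
elim: p n x => [|y p IH] n x /=; first by rewrite addn0.
move=> hx /andP[hxy hp]; rewrite addnS -addSn; apply: IH hp.
rewrite /= in_setU; apply/orP; right; rewrite inE; apply/existsP; exists x.
by rewrite hx.
Qed.

Lemma tree_bound (S : {set T}) :
  (forall v, v \in S -> connect adjF r v) -> #|S| <= #|F| + 1.
Proof.
move=> hc.
have hex : forall v, exists n, (v \in reach n) || (v \notin S).
  move=> v; case vS: (v \in S); last by exists 0; rewrite orbT.
  have /connectP[p hp ->] := hc v vS.
  by exists (0 + size p); rewrite reach_path //= inE.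
pose d v := ex_minn (hex v).
have dP : forall v, (v \in reach (d v)) || (v \notin S).
  by move=> v; rewrite /d; case: ex_minnP.
have dmin : forall v m, v \in reach m -> d v <= m.
  by move=> v m hm; rewrite /d; case: ex_minnP => k _ /(_ m); rewrite hm; apply.
pose f v := [pick e in F | ((a e == v) && (d (b e) < d v)) || ((b e == v) && (d (a e) < d v))].
have fsome : forall v, v \in S :\ r -> exists2 e, f v = Some e & (e \in F) &&
   (((a e == v) && (d (b e) < d v)) || ((b e == v) && (d (a e) < d v))).
  move=> v; rewrite !inE => /andP[vr vS].
  have := dP v; rewrite vS orbF.
  case hdv: (d v) => [|m].
    by rewrite /= inE (negbTE vr).
  rewrite /= in_setU => /orP[hm|].
    by have := dmin _ _ hm; rewrite hdv ltnn.
  rewrite inE => /existsP[u /andP[hu /existsP[e /andP[eF he]]]].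
  have du : d u < m.+1 by rewrite ltnS dmin.
  rewrite /f; case: pickP => [e' He'|/(_ e)]; first by exists e'; rewrite -?hdv.
  case/orP: he => /andP[/eqP ha /eqP hb]; subst.
    by rewrite hdv eF eqxx du orbT.
  by rewrite hdv eF eqxx du.
have finj : {in S :\ r &, injective f}.
  move=> v w hv hw hf.
  have [e fe /andP[_ he]] := fsome v hv.
  have [e' fe' /andP[_ he']] := fsome w hw.
  move: fe'; rewrite -hf fe => -[ee]; subst e'.
  move: he he'.
  case/orP => /andP[/eqP h1 h2]; case/orP => /andP[/eqP h3 h4]; subst => //.
  - by move: (ltn_trans h2 h4); rewrite ltnn.
  - by move: (ltn_trans h2 h4); rewrite ltnn.
have h1 : #|S :\ r| <= #|F|.
  rewrite -(card_in_imset finj).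
  apply: (@leq_trans #|[set Some e | e in F]|); last first.
    by rewrite card_imset //; move=> x y [].
  apply: subset_leq_card; apply/subsetP => o /imsetP[v hv ->].
  have [e -> /andP[eF _]] := fsome v hv.
  by apply/imsetP; exists e.
have := cardsD1 r S; lia.
Qed.
End Tree.
Section Rep.
Variables (T : finType) (f : T -> T).
Hypothesis finv : involutive f.
Definition Rset : {set T} := [set x | enum_rank x <= enum_rank (f x)].
Definition rep x := if enum_rank x <= enum_rank (f x) then x else f x.

Lemma rep_f x : rep (f x) = rep x.
Proof.
rewrite /rep finv; case: leqP => h1; case: leqP => h2 //.
have /val_inj/enum_rank_inj e : enum_rank x = enum_rank (f x) :> nat by lia.
by rewrite -e.
lia.
Qed.

Lemma rep_in x : rep x \in Rset.
Proof. rewrite /rep; case: leqP => h; rewrite /Rset inE ?finv; lia. Qed.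

Lemma rep_id x : x \in Rset -> rep x = x.
Proof. by rewrite /rep /Rset inE => ->. Qed.

Lemma rep_cases x : rep x = x \/ rep x = f x.
Proof. by rewrite /rep; case: leqP; [left|right]. Qed.

Lemma inv_count : #|T| + #|[set x | f x == x]| = 2 * #|Rset|.
Proof.
have hU : Rset :|: f @: Rset = setT.
  apply/setP => x; rewrite !inE; case: leqP => h //=.
  apply/imsetP; exists (f x); last by rewrite finv.
  rewrite inE finv; lia.
have hI : Rset :&: f @: Rset = [set x | f x == x].
  apply/setP => x; rewrite !inE.
  have -> : (x \in f @: Rset) = (f x \in Rset).
    apply/imsetP/idP => [[y hy ->]|hx]; first by rewrite finv.
    by exists (f x); rewrite ?finv.
  rewrite inE finv; apply/idP/eqP => [h|->]; last by rewrite leqnn.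
  have /val_inj/enum_rank_inj e : enum_rank x = enum_rank (f x) :> nat by lia.
  by rewrite -e.
have := cardsUI Rset (f @: Rset).
rewrite hU hI cardsT card_imset; last by apply: (can_inj finv).
lia.
Qed.
End Rep.

Theorem lemma6p5 (g n : nat) (mu nu : seq nat) (G : twisted_graph) :
  1 <= n -> is_partition n mu -> is_partition n nu ->
  1 < g + size mu + size nu ->
  is_twisted_monodromy_graph G g mu nu ->
  #|four_valent G| <= g + 1.
Proof.
move=> _ _ _ _ [hconn [hgen [hval [hiV [hiE [_ [_ [hsrc [_ [_ [hfix [hnoE _]]]]]]]]]]]].
have cV := inv_count hiV; have cE := inv_count hiE.
have fixE : [set x : E G | iE x == x] = set0.
  by apply/setP => e; rewrite !inE; apply/eqP; exact: hnoE.
have k4 : #|four_valent G| = #|[set x : V G | iV x == x]|.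
  apply: eq_card => v; rewrite !inE; apply/eqP/eqP; by case: (hfix v).
have hs : forall e, rep (@iV G) (src (rep (@iE G) e)) = rep (@iV G) (src e).
  move=> e; case: (rep_cases (@iE G) e) => -> //.
  by rewrite (proj1 (hsrc e)) rep_f.
have ht : forall e, rep (@iV G) (tgt (rep (@iE G) e)) = rep (@iV G) (tgt e).
  move=> e; case: (rep_cases (@iE G) e) => -> //.
  by rewrite (proj2 (hsrc e)) rep_f.
pose a := fun e => rep (@iV G) (src e).
pose b := fun e => rep (@iV G) (tgt e).
have key : forall u v, connect (adjF (Rset (@iE G)) a b) (rep (@iV G) u) (rep (@iV G) v).
  move=> u v; have /connectP[p hp ->] := hconn u v.
  elim: p u hp => [|y p IH] u /=; first by rewrite connect0.
  move=> /andP[huy hp]; apply: connect_trans (IH _ hp); apply: connect1.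
  case/existsP: huy => e he; apply/existsP; exists (rep (@iE G) e).
  rewrite (rep_in hiE) /a /b /= hs ht.
  by case/orP: he => /andP[/eqP <- /eqP <-]; rewrite !eqxx ?orbT.
have hRV : #|Rset (@iV G)| <= #|Rset (@iE G)| + 1.
  case: (set_0Vmem (Rset (@iV G))) => [->|[r0 hr0]]; first by rewrite cards0.
  apply: (@tree_bound _ _ _ a b r0) => v hv.
  by rewrite -(rep_id hr0) -(rep_id hv); apply: key.
move: cE; rewrite fixE cards0 => cE.
rewrite k4; rewrite /has_genus in hgen; lia.
Qed.
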